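(* Let $C_i=(Q_i,s_i,D_i,E_i)$, $i\in\{1,2\}$, be finite charts. If $s_1\sim s_2$ (i.e. $C_1\sim C_2$), then $\mathsf{bd}([C_1],[C_2])=0$. Otherwise $\mathsf{bd}([C_1],[C_2])=2^{-n}$, where $n\in\mathbb{N}$ is the largest natural number such that $s_1\sim^{(n)}s_2$.
   Context: Fix a set $V=\{v_1,v_2,\dots\}$ of variables and a set $\Sigma$ of letters. A prechart is a triple $(Q,D,E)$ with $D\subseteq Q\times\Sigma\times Q$ and $E\subseteq Q\times V$ finite relations; write $q\xrightarrow{a}q'$ for $(q,a,q')\in D$, $q\rhd v$ for $(q,v)\in E$, $E(q)=\{v\mid (q,v)\in E\}$. Equivalently a prechart is a pair $(Q,\beta)$ with $\beta:Q\to P_{\mathrm{fin}}(\Sigma\times Q+V)$, $\beta(q)=\{(a,q')\mid q\xrightarrow{a}q'\}\cup E(q)$. A chart $(Q,s,D,E)$ is a prechart with a start state $s\in Q$; it is finite if $Q$ is finite. A bisimulation between precharts $(Q_1,D_1,E_1)$, $(Q_2,D_2,E_2)$ is $R\subseteq Q_1\times Q_2$ such that whenever $(q_1,q_2)\in R$: $E_1(q_1)=E_2(q_2)$; if $q_1\xrightarrow{a}q_1'$ there is $q_2'$ with $q_2\xrightarrow{a}q_2'$ and $(q_1',q_2')\in R$; and symmetrically. States are bisimilar ($\sim$) if related by some bisimulation; charts are bisimilar if their start states are. Stratified bisimilarity: $q_1\sim^{(0)}q_2$ always; $q_1\sim^{(n+1)}q_2$ iff $E_1(q_1)=E_2(q_2)$,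 every $q_1\xrightarrow{a}q_1'$ is matched by some $q_2\xrightarrow{a}q_2'$ with $q_1'\sim^{(n)}q_2'$, and symmetrically. $\Omega$ is the set of finite charts modulo bisimilarity, made into a prechart by $[(Q,s,D,E)]\xrightarrow{a}[(Q,s',D,E)]$ iff $s\xrightarrow{a}s'$ and $[(Q,s,D,E)]\rhd v$ iff $s\rhd v$. Behavioural distance: a 1-bounded pseudometric on $X$ is $d:X\times X\to[0,1]$ with $d(x,x)=0$, symmetry and triangle inequality; $D_X$ denotes the set of these, ordered pointwise (a complete lattice). For $d\in D_X$ define $d^\uparrow$ on $\Sigma\times X+V$ by $d^\uparrow((a,x),(a,y))=\tfrac12 d(x,y)$, $d^\uparrow(m,n)=0$ if $m=n$, and $d^\uparrow(m,n)=1$ otherwise. The Hausdorff lifting is $\mathcal H(d)(A,B)=\max\{\sup_{x\in A}\inf_{y\in B}d(x,y),\ \sup_{y\in B}\inf_{x\in A}d(y,x)\}$ for finite $A,B\subseteq X$, with $\sup\emptyset=0$ and $\inf\emptyset=1$. For a prechart $(Q,\beta)$, $\Phi_\beta:D_Q\to D_Q$ is $\Phi_\beta(d)(q_1,q_2)=\mathcal H(d^\uparrow)(\beta(q_1),\beta(q_2))$; it is monotone and $\mathsf{bd}_\beta$ denotes its least fixpoint. $\mathsf{bd}$ denotes $\mathsf{bd}_\beta$ for the prechart $\Omega$. *)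

(* Defs.v *)
From HB Require Import structures.
From mathcomp Require Import all_boot all_order all_algebra.
From Stdlib Require List.
From mathcomp Require Import boolp classical_sets reals.
Set Implicit Arguments. Unset Strict Implicit. Unset Printing Implicit Defensive.
Import Order.TTheory GRing.Theory Num.Theory.
Local Open Scope classical_set_scope.
Local Open Scope ring_scope.

(* Variables V = {v_1, v_2, ...} are represented by nat; letters by Sig. *)

Record fchart (Sig : Type) := FChart {
  fQ : finType;
  fs : fQ;
  fD : seq (fQ * Sig * fQ);
  fE : seq (fQ * nat) }.

Definition ftrans Sig (C : fchart Sig) (q : fQ C) (a : Sig) (q' : fQ C) : Prop :=
  List.In (q, a, q') (fD C).
Definition fterm Sig (C : fchart Sig) (q : fQ C) (v : nat) : Prop :=
  List.In (q, v) (fE C).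

Definition with_start Sig (C : fchart Sig) (s' : fQ C) : fchart Sig :=
  @FChart Sig (fQ C) s' (fD C) (fE C).

Definition is_bisim Sig (Q1 Q2 : Type)
  (D1 : Q1 -> Sig -> Q1 -> Prop) (E1 : Q1 -> nat -> Prop)
  (D2 : Q2 -> Sig -> Q2 -> Prop) (E2 : Q2 -> nat -> Prop)
  (R : Q1 -> Q2 -> Prop) : Prop :=
  forall q1 q2, R q1 q2 ->
    (forall v, E1 q1 v <-> E2 q2 v) /\
    (forall a q1', D1 q1 a q1' -> exists q2', D2 q2 a q2' /\ R q1' q2') /\
    (forall a q2', D2 q2 a q2' -> exists q1', D1 q1 a q1' /\ R q1' q2').

Definition chart_bisim Sig (C1 C2 : fchart Sig) : Prop :=
  exists R, @is_bisim Sig (fQ C1) (fQ C2) (@ftrans Sig C1) (@fterm Sig C1)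
                  (@ftrans Sig C2) (@fterm Sig C2) R /\ R (fs C1) (fs C2).

Fixpoint sbisim Sig (Q1 Q2 : Type)
  (D1 : Q1 -> Sig -> Q1 -> Prop) (E1 : Q1 -> nat -> Prop)
  (D2 : Q2 -> Sig -> Q2 -> Prop) (E2 : Q2 -> nat -> Prop)
  (n : nat) (q1 : Q1) (q2 : Q2) : Prop :=
  match n with
  | 0 => True
  | n'.+1 =>
    (forall v, E1 q1 v <-> E2 q2 v) /\
    (forall a q1', D1 q1 a q1' ->
        exists q2', D2 q2 a q2' /\ sbisim D1 E1 D2 E2 n' q1' q2') /\
    (forall a q2', D2 q2 a q2' ->
        exists q1', D1 q1 a q1' /\ sbisim D1 E1 D2 E2 n' q1' q2')
  end.

Definition chart_sbisim Sig (n : nat) (C1 C2 : fchart Sig) : Prop :=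
  @sbisim Sig (fQ C1) (fQ C2) (@ftrans Sig C1) (@fterm Sig C1)
          (@ftrans Sig C2) (@fterm Sig C2) n (fs C1) (fs C2).

Definition cls Sig (C : fchart Sig) : fchart Sig -> Prop :=
  fun C' => chart_bisim C' C.

Definition Omega (Sig : Type) : Type :=
  {S : fchart Sig -> Prop | exists C : fchart Sig, S = cls C}.

Definition class_of Sig (C : fchart Sig) : Omega Sig :=
  exist _ (cls C) (ex_intro _ C erefl).

Definition Otrans Sig (x : Omega Sig) (a : Sig) (y : Omega Sig) : Prop :=
  exists C : fchart Sig, proj1_sig x C /\
    exists s' : fQ C, ftrans (fs C) a s' /\ proj1_sig y (with_start s').

Definition Oterm Sig (x : Omega Sig) (v : nat) : Prop :=
  exists C : fchart Sig, proj1_sig x C /\ fterm (fs C) v.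

Section Dist.
Variable R : realType.

Definition pseudometric (X : Type) (d : X -> X -> R) : Prop :=
  (forall x y, 0 <= d x y <= 1) /\
  (forall x, d x x = 0) /\
  (forall x y, d x y = d y x) /\
  (forall x y z, d x z <= d x y + d y z).

(* sup with sup(empty) = 0, inf with inf(empty) = 1 *)
Definition supz (A : set R) : R := if pselect (A = set0) then 0 else sup A.
Definition inf1 (A : set R) : R := if pselect (A = set0) then 1 else inf A.

Definition hausdorff (T : Type) (d : T -> T -> R) (A B : T -> Prop) : R :=
  Num.max
    (supz [set r | exists x, A x /\
             r = inf1 [set r' | exists y, B y /\ r' = d x y]])
    (supz [set r | exists y, B y /\
             r = inf1 [set r' | exists x, A x /\ r' = d y x]]).

Definition dup (Sig X : Type) (d : X -> X -> R)
  (m n : (Sig * X) + nat) : R :=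
  match m, n with
  | inl (a, x), inl (b, y) => if pselect (a = b) then d x y / 2 else 1
  | inr v, inr w => if v == w then 0 else 1
  | _, _ => 1
  end.

Definition beta (Sig Q : Type) (D : Q -> Sig -> Q -> Prop) (E : Q -> nat -> Prop)
  (q : Q) : (Sig * Q) + nat -> Prop :=
  fun m => match m with inl (a, q') => D q a q' | inr v => E q v end.

Definition Phi (Sig Q : Type) (D : Q -> Sig -> Q -> Prop) (E : Q -> nat -> Prop)
  (d : Q -> Q -> R) : Q -> Q -> R :=
  fun q1 q2 => hausdorff (@dup Sig Q d) (beta D E q1) (beta D E q2).

Definition is_lfp_Phi (Sig Q : Type) (D : Q -> Sig -> Q -> Prop)
  (E : Q -> nat -> Prop) (d : Q -> Q -> R) : Prop :=
  pseudometric d /\ (forall x y, Phi D E d x y = d x y) /\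
  (forall d', pseudometric d' -> (forall x y, Phi D E d' x y = d' x y) ->
     forall x y, d x y <= d' x y).

(* bd_beta: the least fixpoint (chosen by description; it is unique) *)
Definition bd_of (Sig Q : Type) (D : Q -> Sig -> Q -> Prop) (E : Q -> nat -> Prop)
  : Q -> Q -> R :=
  match pselect (exists d, is_lfp_Phi D E d) with
  | left H => proj1_sig (cid H)
  | right _ => fun _ _ => 0
  end.

Definition bd (Sig : Type) : Omega Sig -> Omega Sig -> R :=
  @bd_of Sig (Omega Sig) (@Otrans Sig) (@Oterm Sig).

End Dist.

(* Main.v *)
Require Import Defs.
From HB Require Import structures.
From mathcomp Require Import all_boot all_order all_algebra.
From mathcomp Require Import boolp classical_sets reals.
From mathcomp Require Import lra.
Set Implicit Arguments. Unset Strict Implicit.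
Local Open Scope classical_set_scope.
Import Order.TTheory GRing.Theory Num.Theory.
Local Open Scope ring_scope.

Section Pow.
Variable R : realType.
Lemma p_gt0 n : 0 < (2:R) ^- n.
Proof. by rewrite invr_gt0 exprn_gt0. Qed.
Lemma p_ge0 n : 0 <= (2:R) ^- n.
Proof. exact/ltW/p_gt0. Qed.
Lemma p_le1 n : (2:R) ^- n <= 1.
Proof. by rewrite invf_le1 ?exprn_gt0 // exprn_ege1 // ler1n. Qed.
Lemma pS n : (2:R) ^- n.+1 = (2:R) ^- n / 2.
Proof. by rewrite exprSr invfM. Qed.
Lemma p_anti m n : (m <= n)%N -> (2:R) ^- n <= (2:R) ^- m.
Proof.
move=> mn; rewrite lef_pV2 ?posrE ?exprn_gt0 //.
by rewrite ler_eXn2l // ltr1n.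
Qed.
Lemma p_small (r : R) : 0 <= r -> (forall n, r <= (2:R) ^- n) -> r = 0.
Proof.
move=> r0 H; apply/eqP; rewrite eq_le r0 andbT; rewrite leNgt; apply/negP => rp.
have [k Hk] := ltr_add_invr rp; rewrite add0r in Hk.
have := H k.+1; apply/negP; rewrite -ltNge; apply: le_lt_trans Hk.
rewrite lef_pV2 ?posrE ?exprn_gt0 ?ltr0n //.
rewrite -natrX ler_nat; apply: ltnW; exact: ltn_expl.
Qed.
End Pow.
Local Notation inf1 := Defs.inf1.
Section SupInf.
Variable R : realType.
Implicit Types A B : set R.

Lemma supz_le A c : 0 <= c -> (forall r, A r -> r <= c) -> supz A <= c.
Proof.
move=> c0 H; rewrite /supz; case: pselect => // An.
apply: ge_sup => //; exact/set0P/eqP.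
Qed.

Lemma supz_ge A r : A r -> (forall r, A r -> r <= 1) -> r <= supz A.
Proof.
move=> Ar H; rewrite /supz; case: pselect => [A0|An].
  by rewrite A0 in Ar.
by apply: ub_le_sup => //; exists 1.
Qed.



Lemma supz_ge0 A : (forall r, A r -> 0 <= r) -> (forall r, A r -> r <= 1) -> 0 <= supz A.
Proof.
move=> H0 H1; case: (pselect (A = set0)) => [A0|An].
  by rewrite /supz; case: pselect.
have [r Ar] : A !=set0 by exact/set0P/eqP.
apply: (le_trans (H0 _ Ar)); exact: supz_ge.
Qed.

Lemma inf1_le B r : B r -> (forall r, B r -> 0 <= r) -> inf1 B <= r.
Proof.
move=> Br H; rewrite /inf1; case: pselect => [B0|Bn].
  by rewrite B0 in Br.
by apply: ge_inf => //; exists 0.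
Qed.

Lemma inf1_ge B c : c <= 1 -> (forall r, B r -> c <= r) -> c <= inf1 B.
Proof.
move=> c1 H; rewrite /inf1; case: pselect => // Bn.
apply: lb_le_inf => //; exact/set0P/eqP.
Qed.

Lemma inf1_01 B : (forall r, B r -> 0 <= r <= 1) -> 0 <= inf1 B <= 1.
Proof.
move=> H; apply/andP; split.
  apply: inf1_ge => // r /H /andP[] //.
case: (pselect (B = set0)) => [B0|Bn].
  by rewrite /inf1; case: pselect.
have [r Br] : B !=set0 by exact/set0P/eqP.
have h0 : forall s, B s -> 0 <= s by move=> s /H /andP[].
apply: (le_trans (inf1_le Br h0)).
by have /andP[] := H _ Br.
Qed.

Lemma supz_01 A : (forall r, A r -> 0 <= r <= 1) -> 0 <= supz A <= 1.
Proof.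
move=> H; apply/andP; split.
  by apply: supz_ge0 => r /H /andP[].
by apply: supz_le => // r /H /andP[].
Qed.
End SupInf.
Section SB.
Variable Sig : Type.
Variables (Q1 Q2 Q3 : Type).
Variables (D1 : Q1 -> Sig -> Q1 -> Prop) (E1 : Q1 -> nat -> Prop).
Variables (D2 : Q2 -> Sig -> Q2 -> Prop) (E2 : Q2 -> nat -> Prop).
Variables (D3 : Q3 -> Sig -> Q3 -> Prop) (E3 : Q3 -> nat -> Prop).

Lemma sb_anti n q1 q2 : sbisim D1 E1 D2 E2 n.+1 q1 q2 -> sbisim D1 E1 D2 E2 n q1 q2.
Proof.
elim: n q1 q2 => [//|n IH] q1 q2 /= [HE [Hf Hb]]; split => //; split.
- move=> a q1' /Hf [q2' [H1 H2]]; exists q2'; split => //; exact: IH.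
- move=> a q2' /Hb [q1' [H1 H2]]; exists q1'; split => //; exact: IH.
Qed.

Lemma sb_le m n q1 q2 : (m <= n)%N -> sbisim D1 E1 D2 E2 n q1 q2 -> sbisim D1 E1 D2 E2 m q1 q2.
Proof.
move=> /subnK <-; elim: (n - m)%N => [//|k IH] H.
apply: IH; apply: sb_anti; by rewrite -addSn.
Qed.

Lemma sb_sym n q1 q2 : sbisim D1 E1 D2 E2 n q1 q2 -> sbisim D2 E2 D1 E1 n q2 q1.
Proof.
elim: n q1 q2 => [//|n IH] q1 q2 /= [HE [Hf Hb]]; split; first by move=> v; split => /HE.
split.
- move=> a q2' /Hb [q1' [H1 H2]]; exists q1'; split => //; exact: IH.
- move=> a q1' /Hf [q2' [H1 H2]]; exists q2'; split => //; exact: IH.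
Qed.

Lemma bisim_sb (R : Q1 -> Q2 -> Prop) n q1 q2 : is_bisim D1 E1 D2 E2 R -> R q1 q2 ->
  sbisim D1 E1 D2 E2 n q1 q2.
Proof.
move=> HR; elim: n q1 q2 => [//|n IH] q1 q2 Hq /=.
have [HE [Hf Hb]] := HR _ _ Hq; split => //; split.
- move=> a q1' /Hf [q2' [H1 H2]]; exists q2'; split => //; exact: IH.
- move=> a q2' /Hb [q1' [H1 H2]]; exists q1'; split => //; exact: IH.
Qed.

Lemma sb_trans n q1 q2 q3 : sbisim D1 E1 D2 E2 n q1 q2 -> sbisim D2 E2 D3 E3 n q2 q3 ->
  sbisim D1 E1 D3 E3 n q1 q3.
Proof.
elim: n q1 q2 q3 => [//|n IH] q1 q2 q3 /= [HE [Hf Hb]] [HE' [Hf' Hb']].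
split; first by move=> v; rewrite HE HE'.
split.
- move=> a q1' /Hf [q2' [H1 H2]]; have [q3' [H3 H4]] := Hf' _ _ H1.
  exists q3'; split => //; exact: IH H4.
- move=> a q3' /Hb' [q2' [H1 H2]]; have [q1' [H3 H4]] := Hb _ _ H1.
  exists q1'; split => //; exact: IH H2.
Qed.
End SB.

Lemma sb_refl Sig Q (D : Q -> Sig -> Q -> Prop) E n q : sbisim D E D E n q q.
Proof.
elim: n q => [//|n IH] q /=; split => //; split.
- move=> a q' H; exists q'; split => //.
- move=> a q' H; exists q'; split => //.
Qed.

Lemma list_pigeon (Y : Type) (P : nat -> Y -> Prop) (l : list Y) :
  (forall n y, P n.+1 y -> P n y) ->
  (forall n, exists y, List.In y l /\ P n y) ->
  exists y, List.In y l /\ forall n, P n y.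
Proof.
move=> Pa; have Ple : forall m n y, (m <= n)%N -> P n y -> P m y.
  move=> m n y /subnK <-; elim: (n - m)%N => [//|k IH] H.
  apply: IH; apply: Pa; by rewrite -addSn.
elim: l => [|y l IH] H.
  by have [y [[] _]] := H 0%N.
case: (pselect (forall n, P n y)) => [Hy|Hy].
  by exists y; split; [left|].
have [n0 Hn0] : exists n0, ~ P n0 y.
  apply: contrapT => HH; apply: Hy => n; apply: contrapT => Hn; apply: HH; by exists n.
have [y' [H1 H2]] : exists y', List.In y' l /\ forall n, P n y'.
  apply: IH => n; have [y' [[<-|Hin] Hp]] := H (n + n0)%N.
    by exfalso; apply: Hn0; apply: Ple Hp; rewrite leq_addl.
  by exists y'; split => //; apply: Ple Hp; rewrite leq_addr.
by exists y'; split; [right|].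
Qed.

Lemma notall (T : Type) (P : T -> Prop) : ~ (forall x, P x) -> exists x, ~ P x.
Proof.
move=> H; apply: contrapT => H'; apply: H => x; apply: contrapT => Hx; apply: H'; by exists x.
Qed.
Lemma notimp (A B : Prop) : ~ (A -> B) -> A /\ ~ B.
Proof.
move=> H; split; first by apply: contrapT => HA; apply: H => /HA.
by move=> HB; apply: H.
Qed.

Section Metric.
Variable R : realType.
Variables (Sig Q : Type) (D : Q -> Sig -> Q -> Prop) (E : Q -> nat -> Prop).
Local Notation S n x y := (sbisim D E D E n x y).

Definition dd (x y : Q) : R :=
  match pselect (exists n, ~~ `[< S n x y >]) with
  | left H => (2:R) ^- (ex_minn (P := fun n => ~~ `[< S n x y >]) H).-1
  | right _ => 0
  end.

Lemma dd_cases x y : (dd x y = 0 /\ forall n, S n x y) \/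
  exists k, dd x y = (2:R) ^- k /\ S k x y /\ ~ S k.+1 x y.
Proof.
rewrite /dd; case: pselect => [H|H].
  right; case: ex_minnP => m Hm Hmin.
  have Hm' : ~ S m x y by move=> Hs; move/negP: Hm; apply; exact/asboolP.
  case: m Hm Hmin Hm' => [|k] Hm Hmin Hm'; first by case: Hm'.
  exists k; split => //; split => //.
  apply: contrapT => nk; suff: (k.+1 <= k)%N by rewrite ltnn.
  by apply: Hmin; apply/negP => /asboolP.
left; split => // n; apply: contrapT => Hn; apply: H; exists n.
by apply/negP => /asboolP.
Qed.

Lemma dd_le n x y : S n x y -> dd x y <= (2:R) ^- n.
Proof.
move=> Hs; case: (dd_cases x y) => [[-> _]|[k [-> [Hk Hk1]]]]; first exact: p_ge0.
apply: p_anti; rewrite leqNgt; apply/negP => kn; apply: Hk1; exact: sb_le Hs.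
Qed.

Lemma dd_ge k x y : ~ S k.+1 x y -> (2:R) ^- k <= dd x y.
Proof.
move=> Hn; case: (dd_cases x y) => [[_ H]|[j [-> [Hj Hj1]]]]; first by case: Hn.
apply: p_anti; rewrite leqNgt; apply/negP => kn; apply: Hn; exact: sb_le Hj.
Qed.

Lemma dd01 x y : 0 <= dd x y <= 1.
Proof.
case: (dd_cases x y) => [[-> _]|[k [-> _]]]; first by rewrite lexx ler01.
by rewrite p_ge0 p_le1.
Qed.

Lemma dd_sym_le x y : dd x y <= dd y x.
Proof.
case: (dd_cases x y) => [[-> _]|[k [-> [_ Hk]]]]; first by case/andP: (dd01 y x).
apply: dd_ge => H; apply: Hk; exact: sb_sym.
Qed.

Lemma dd_pm : pseudometric dd.
Proof.
split; first exact: dd01.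
split.
  move=> x; case: (dd_cases x x) => [[-> _]//|[k [_ [_ Hk]]]].
  by case: Hk; apply: sb_refl.
split; first by move=> x y; apply/le_anti; rewrite !dd_sym_le.
move=> x y z; case: (dd_cases x z) => [[-> _]|[k [-> [_ Hk]]]].
  by case/andP: (dd01 x y) => h _; case/andP: (dd01 y z) => h' _; lra.
case: (pselect (S k.+1 x y)) => Hxy.
  have Hyz : ~ S k.+1 y z by move=> H; apply: Hk; exact: sb_trans H.
  have := dd_ge Hyz; case/andP: (dd01 x y) => h _; lra.
have := dd_ge Hxy; case/andP: (dd01 y z) => h _; lra.
Qed.

Definition half (d : Q -> Q -> R) x y := supz [set r | exists m, beta D E x m /\
  r = Defs.inf1 [set r' | exists m', beta D E y m' /\ r' = dup d m m']].

Lemma Phi_half d x y : Phi D E d x y = Num.max (half d x y) (half d y x).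
Proof. by []. Qed.

Lemma dup01 (d : Q -> Q -> R) : (forall x y, 0 <= d x y <= 1) ->
  forall m m', 0 <= @dup R Sig Q d m m' <= 1.
Proof.
move=> H [[a x]|v] [[b y]|w] /=; try by rewrite ler01 lexx.
  case: pselect => [Hab|Hab] /=; last by rewrite ler01 lexx.
  case/andP: (H x y) => h1 h2; by apply/andP; split; lra.
by case: eqP => _; rewrite ?ler01 ?lexx.
Qed.

Lemma half01 d x y : (forall x y, 0 <= d x y <= 1) -> 0 <= half d x y <= 1.
Proof.
move=> H; apply: supz_01 => r [m [_ ->]]; apply: inf1_01 => r' [m' [_ ->]].
exact: dup01.
Qed.

Lemma inf1_dup_le (d : Q -> Q -> R) m (B : (Sig * Q) + nat -> Prop) m' :
  (forall x y, 0 <= d x y <= 1) -> B m' ->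
  Defs.inf1 [set r' | exists m'', B m'' /\ r' = dup d m m''] <= dup d m m'.
Proof.
move=> H Hm; apply: inf1_le; first by exists m'.
by move=> r' [m'' [_ ->]]; case/andP: (dup01 H m m'').
Qed.

Lemma half_el01 (d : Q -> Q -> R) m (B : (Sig * Q) + nat -> Prop) :
  (forall x y, 0 <= d x y <= 1) ->
  0 <= Defs.inf1 [set r' | exists m'', B m'' /\ r' = dup d m m''] <= 1.
Proof.
move=> H; apply: inf1_01 => r' [m' [_ ->]]; exact: dup01.
Qed.

Lemma half_up n x y : S n x y -> half dd x y <= (2:R) ^- n.
Proof.
case: n => [_|n [HE [Hf _]]]; first by rewrite expr0 invr1; case/andP: (half01 x y dd01).
apply: supz_le; first exact: p_ge0.
have H0 : forall m r', (exists m', beta D E y m' /\ r' = dup dd m m') -> 0 <= r'.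
  by move=> m r' [m' [_ ->]]; case/andP: (dup01 dd01 m m').
move=> r [[[a x']|v] [Hm ->]].
  have [y' [Hy' Hs]] := Hf _ _ Hm.
  apply: (le_trans (inf1_dup_le (inl (a, x')) (m' := inl (a, y')) dd01 Hy')).
  rewrite /= ; case: pselect => //= Haa.
  have := dd_le Hs; rewrite pS; lra.
apply: (le_trans (inf1_dup_le (inr v) (m' := inr v) dd01 _)); first by apply/HE.
by rewrite /= eqxx; exact: p_ge0.
Qed.

Lemma half_lo_E (d' : Q -> Q -> R) x y v : (forall x y, 0 <= d' x y <= 1) ->
  E x v -> ~ E y v -> 1 <= half d' x y.
Proof.
move=> H Hx Hy.
apply: (le_trans _ (supz_ge (r := Defs.inf1 [set r' | exists m', beta D E y m' /\ r' = dup d' (inr v) m']) _ _)).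
- apply: inf1_ge => // r' [[[b y']|w] [Hm ->]] //=.
  by case: eqP => // ?; subst w.
- by exists (inr v).
- by move=> r [m [_ ->]]; case/andP: (@half_el01 d' m (beta D E y) H).
Qed.

Lemma half_lo_D (d' : Q -> Q -> R) x y a x' (c : R) : (forall x y, 0 <= d' x y <= 1) -> c <= 1 ->
  D x a x' -> (forall y', D y a y' -> c <= d' x' y' / 2) -> c <= half d' x y.
Proof.
move=> H c1 Hx Hy.
apply: (le_trans _ (supz_ge (r := Defs.inf1 [set r' | exists m', beta D E y m' /\ r' = dup d' (inl (a, x')) m']) _ _)).
- apply: inf1_ge => // r' [[[b y']|w] [Hm ->]] //=.
  by case: pselect => // ?; subst b; exact: Hy.
- by exists (inl (a, x')).
- by move=> r [m [_ ->]]; case/andP: (@half_el01 d' m (beta D E y) H).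
Qed.

Lemma Phi_lo n (d' : Q -> Q -> R) x y (c : R) : (forall x y, 0 <= d' x y <= 1) -> c <= 1 ->
  (forall x' y', ~ S n x' y' -> c <= d' x' y' / 2) -> ~ S n.+1 x y ->
  c <= Phi D E d' x y.
Proof.
move=> H c1 Hl Hn; rewrite Phi_half le_max.
have c1' : forall z, 1 <= z -> c <= z by move=> z hz; lra.
case: (pselect (forall v, E x v <-> E y v)) => HE.
  case: (pselect (forall a q1', D x a q1' -> exists q2', D y a q2' /\ S n q1' q2')) => Hf.
    have Hb : ~ (forall a q2', D y a q2' -> exists q1', D x a q1' /\ S n q1' q2').
      by move=> Hb; apply: Hn.
    have [a Ha] := notall Hb; have [y' Hy] := notall Ha; have [Hy' Hno] := notimp Hy.
    apply/orP; right; apply: (half_lo_D H c1 Hy') => x' Hx'.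
    apply: Hl => Hs; apply: Hno; exists x'; split => //; exact: sb_sym.
  have [a Ha] := notall Hf; have [x' Hx] := notall Ha; have [Hx' Hno] := notimp Hx.
  apply/orP; left; apply: (half_lo_D H c1 Hx') => y' Hy'.
  apply: Hl => Hs; apply: Hno; exists y'; split => //.
have [v Hv] := notall HE.
case: (pselect (E x v)) => Hxv.
  apply/orP; left; apply/c1'; apply: (half_lo_E H Hxv) => Hyv; apply: Hv; by split.
case: (pselect (E y v)) => Hyv; last by case: Hv; split.
by apply/orP; right; apply/c1'; apply: (half_lo_E H Hyv).
Qed.

Lemma dd_fix x y : Phi D E dd x y = dd x y.
Proof.
case: (dd_cases x y) => [[-> Hall]|[k [-> [Hk Hk1]]]].
  have h0 : forall a b, (forall n, S n a b) -> half dd a b = 0.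
    move=> a b Hab; apply: p_small; first by case/andP: (half01 a b dd01).
    by move=> n; apply: half_up.
  rewrite Phi_half !h0 ?maxxx // => n; exact: sb_sym.
apply/le_anti/andP; split.
  by rewrite Phi_half ge_max !half_up //; exact: sb_sym.
case: k Hk Hk1 => [|j] Hk Hk1.
  rewrite expr0 invr1; apply: (@Phi_lo 0%N) => //; exact: dd01.
apply: (@Phi_lo j.+1) => //; first exact: dd01; first exact: p_le1.
move=> x' y' /dd_ge; rewrite pS; lra.
Qed.

Lemma dd_least (d' : Q -> Q -> R) : pseudometric d' ->
  (forall x y, Phi D E d' x y = d' x y) -> forall x y, dd x y <= d' x y.
Proof.
move=> [H01 _] Hfix.
have L : forall k x y, ~ S k.+1 x y -> (2:R) ^- k <= d' x y.
  elim=> [|k IH] x y Hn; rewrite -Hfix.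
    rewrite expr0 invr1; apply: (@Phi_lo 0%N) => // x' y' H0; exfalso; exact: H0.
  apply: (@Phi_lo k.+1) => //; first exact: p_le1.
  by move=> x' y' /IH; rewrite pS; lra.
move=> x y; case: (dd_cases x y) => [[-> _]|[k [-> [_ Hk]]]].
  by case/andP: (H01 x y).
exact: L.
Qed.

Lemma bd_of_eq : bd_of R D E = dd.
Proof.
rewrite /bd_of; case: pselect => [H|H]; last first.
  exfalso; apply: H; exists dd; split; first exact: dd_pm.
  split; [exact: dd_fix|exact: dd_least].
case: (cid H) => d0 [Hp [Hf Hl]] /=.
apply/funext => x; apply/funext => y; apply/le_anti/andP; split.
  apply: Hl; [exact: dd_pm|exact: dd_fix].
exact: dd_least.
Qed.
End Metric.

Local Notation ftrans := Defs.ftrans.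
Local Notation fterm := Defs.fterm.
Section Charts.
Variable Sig : Type.
Implicit Types C : fchart Sig.

Lemma cb_refl C : chart_bisim C C.
Proof.
exists (fun q1 q2 => q1 = q2); split => // q1 q2 ->; split => //; split.
- by move=> a q' H; exists q'.
- by move=> a q' H; exists q'.
Qed.

Lemma cb_sym C1 C2 : chart_bisim C1 C2 -> chart_bisim C2 C1.
Proof.
move=> [R [HR Hs]]; exists (fun q2 q1 => R q1 q2); split => // q2 q1 /HR [HE [Hf Hb]].
split; first by move=> v; split => /HE.
split.
- move=> a q' /Hb [q1' [H1 H2]]; by exists q1'.
- move=> a q' /Hf [q1' [H1 H2]]; by exists q1'.
Qed.

Lemma cb_trans C1 C2 C3 : chart_bisim C1 C2 -> chart_bisim C2 C3 -> chart_bisim C1 C3.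
Proof.
move=> [R [HR Hs]] [R' [HR' Hs']].
exists (fun q1 q3 => exists q2, R q1 q2 /\ R' q2 q3); split; last by exists (fs C2).
move=> q1 q3 [q2 [H12 H23]].
have [HE [Hf Hb]] := HR _ _ H12; have [HE' [Hf' Hb']] := HR' _ _ H23.
split; first by move=> v; rewrite HE HE'.
split.
- move=> a q1' /Hf [q2' [H1 H2]]; have [q3' [H3 H4]] := Hf' _ _ H1.
  exists q3'; split => //; by exists q2'.
- move=> a q3' /Hb' [q2' [H1 H2]]; have [q1' [H3 H4]] := Hb _ _ H1.
  exists q1'; split => //; by exists q2'.
Qed.

Lemma cls_eq C D : chart_bisim C D -> cls C = cls D.
Proof.
move=> H; apply/funext => W; apply/propext; rewrite /cls; split => HW.
  exact: cb_trans HW H.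
exact: cb_trans HW (cb_sym H).
Qed.

Lemma omega_eq (y : Omega Sig) W : proj1_sig y W -> y = class_of W.
Proof.
case: y => S [C0 HS] /= HW.
have E : S = cls W by rewrite HS; apply: cls_eq; apply: cb_sym; rewrite HS in HW.
rewrite /class_of; move: (ex_intro _ W _) => p; move: HS; rewrite E => HS.
by congr exist; apply: Prop_irrelevance.
Qed.

Lemma class_eq C D : chart_bisim C D -> class_of C = class_of D.
Proof. move=> H; symmetry; exact: omega_eq. Qed.

Lemma Oterm_cls C v : Oterm (class_of C) v <-> fterm (fs C) v.
Proof.
split.
  move=> [C' [[R [HR Hs]] Ht]]; have [HE _] := HR _ _ Hs; exact/HE.
by move=> H; exists C; split => //; exact: cb_refl.
Qed.

Lemma Otrans_cls C a y : Otrans (class_of C) a y <->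
  exists s, ftrans (fs C) a s /\ y = class_of (with_start s).
Proof.
split.
  move=> [C' [[R [HR Hs]] [s' [Ht Hy]]]].
  have [_ [Hf _]] := HR _ _ Hs.
  have [s [H1 H2]] := Hf _ _ Ht.
  exists s; split => //; rewrite (omega_eq Hy); apply: class_eq.
  by exists R; split.
move=> [s [Ht ->]]; exists C; split; first exact: cb_refl.
by exists s; split => //=; exact: cb_refl.
Qed.

Lemma O_sb n C1 C2 :
  sbisim (@Otrans Sig) (@Oterm Sig) (@Otrans Sig) (@Oterm Sig) n (class_of C1) (class_of C2)
  <-> chart_sbisim n C1 C2.
Proof.
elim: n C1 C2 => [//|n IH] C1 C2 /=; split.
  move=> [HE [Hf Hb]]; split.
    by move=> v; rewrite -!Oterm_cls.
  split.
  - move=> a q1' Ht.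
    have Ho : Otrans (class_of C1) a (class_of (with_start q1')) by apply/Otrans_cls; exists q1'.
    have [y2 [Hy2 Hs]] := Hf _ _ Ho.
    have /Otrans_cls [q2' [Ht2 Ey]] := Hy2; subst y2.
    exists q2'; split => //; exact: (proj1 (IH _ _) Hs).
  - move=> a q2' Ht.
    have Ho : Otrans (class_of C2) a (class_of (with_start q2')) by apply/Otrans_cls; exists q2'.
    have [y1 [Hy1 Hs]] := Hb _ _ Ho.
    have /Otrans_cls [q1' [Ht1 Ey]] := Hy1; subst y1.
    exists q1'; split => //; exact: (proj1 (IH _ _) Hs).
move=> [HE [Hf Hb]]; split.
  by move=> v; rewrite !Oterm_cls.
split.
- move=> a y1 /Otrans_cls [q1' [Ht ->]].
  have [q2' [Ht2 Hs]] := Hf _ _ Ht.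
  exists (class_of (with_start q2')); split; first by apply/Otrans_cls; exists q2'.
  exact: (proj2 (IH (with_start q1') (with_start q2')) Hs).
- move=> a y2 /Otrans_cls [q2' [Ht ->]].
  have [q1' [Ht1 Hs]] := Hb _ _ Ht.
  exists (class_of (with_start q1')); split; first by apply/Otrans_cls; exists q1'.
  exact: (proj2 (IH (with_start q1') (with_start q2')) Hs).
Qed.

Lemma cb_sb C1 C2 : chart_bisim C1 C2 <-> forall n, chart_sbisim n C1 C2.
Proof.
split.
  move=> [R [HR Hs]] n; exact: bisim_sb HR Hs.
move=> H.
exists (fun q1 q2 => forall n, sbisim (@ftrans Sig C1) (@fterm Sig C1)
   (@ftrans Sig C2) (@fterm Sig C2) n q1 q2); split; last exact: H.
move=> q1 q2 Hq; split.
  by have [HE _] := Hq 1%N.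
split.
- move=> a q1' Ht.
  have [[[t1 t2] t3] [Hin HP]] := @list_pigeon _ (fun n (t : fQ C2 * Sig * fQ C2) =>
     t.1.1 = q2 /\ t.1.2 = a /\ sbisim (@ftrans Sig C1) (@fterm Sig C1)
       (@ftrans Sig C2) (@fterm Sig C2) n q1' t.2) (fD C2)
    (fun n t '(conj h1 (conj h2 h3)) => conj h1 (conj h2 (sb_anti h3)))
    (fun n => let: conj _ (conj Hf _) := Hq n.+1 in
       let: ex_intro q2' (conj H1 H2) := Hf _ _ Ht in
       ex_intro _ (q2, a, q2') (conj H1 (conj erefl (conj erefl H2)))).
  have [/= e1 [/= e2 _]] := HP 0%N; subst t1 t2.
  exists t3; split => // n; by have [_ [_ ]] := HP n.
- move=> a q2' Ht.
  have [[[t1 t2] t3] [Hin HP]] := @list_pigeon _ (fun n (t : fQ C1 * Sig * fQ C1) =>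
     t.1.1 = q1 /\ t.1.2 = a /\ sbisim (@ftrans Sig C1) (@fterm Sig C1)
       (@ftrans Sig C2) (@fterm Sig C2) n t.2 q2') (fD C1)
    (fun n t '(conj h1 (conj h2 h3)) => conj h1 (conj h2 (sb_anti h3)))
    (fun n => let: conj _ (conj _ Hb) := Hq n.+1 in
       let: ex_intro q1' (conj H1 H2) := Hb _ _ Ht in
       ex_intro _ (q1, a, q1') (conj H1 (conj erefl (conj erefl H2)))).
  have [/= e1 [/= e2 _]] := HP 0%N; subst t1 t2.
  exists t3; split => // n; by have [_ [_ ]] := HP n.
Qed.
End Charts.

Local Open Scope ring_scope.
Theorem mainTheorem1 (R : realType) (Sig : Type) (C1 C2 : fchart Sig) :
  (chart_bisim C1 C2 -> bd R (class_of C1) (class_of C2) = 0) /\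
  (~ chart_bisim C1 C2 ->
     exists n : nat,
       chart_sbisim n C1 C2 /\
       (forall m : nat, chart_sbisim m C1 C2 -> (m <= n)%N) /\
       bd R (class_of C1) (class_of C2) = (2 : R) ^- n).
Proof.
rewrite /bd bd_of_eq.
split.
  move=> Hb; case: (@dd_cases R Sig (Omega Sig) (@Otrans Sig) (@Oterm Sig) (class_of C1) (class_of C2)) => [[-> _]//|[k [_ [_ Hk]]]].
  by exfalso; apply: Hk; apply/O_sb; exact: (proj1 (cb_sb C1 C2) Hb).
move=> Hn; case: (@dd_cases R Sig (Omega Sig) (@Otrans Sig) (@Oterm Sig) (class_of C1) (class_of C2)) => [[_ Hall]|[k [-> [Hk Hk1]]]].
  by exfalso; apply: Hn; apply/cb_sb => n; apply/O_sb; exact: Hall.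
exists k; split; first exact/O_sb.
split => // m Hm; rewrite leqNgt; apply/negP => km; apply: Hk1.
by apply: (sb_le km); apply/O_sb.
Qed.
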